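(* Let $m=p_1^{\alpha_1}p_2^{\alpha_2}$, where $p_1,p_2>2$ are distinct primes and $\alpha_1,\alpha_2$ are positive integers. Let $t=\mathrm{ord}_m(2)$ and let $\gamma\in\mathbb{F}_{2^t}^*$ be a primitive $m$th root of unity. Let $\rho(z_1,z_2)=(1+z_2^{-1})(1+z_1^{-1})^{-1}$ and let $$\mathcal{D}=\{(z_1,z_2)\in(\mathbb{F}_{2^t}^*\setminus\{1\})^2:\ \mathrm{ord}(z_1)\mid p_1^{\alpha_1},\ \mathrm{ord}(z_2)\mid p_2^{\alpha_2}\},$$ where $\mathrm{ord}(z)$ denotes the multiplicative order of $z$ in $\mathbb{F}_{2^t}^*$. Then $m$ is good if and only if $\rho$ is not injective on $\mathcal{D}$.
   Context: $\mathrm{ord}_m(2)$ is the multiplicative order of $2$ modulo $m$. The canonical set of $m$ is $S_m=\{s_{01},s_{10},s_{11}\}\subseteq\mathbb{Z}_m$, where for $\sigma=(\sigma_1,\sigma_2)\in\{0,1\}^2\setminus\{(0,0)\}$, $s_\sigma$ is the unique element of $\mathbb{Z}_m$ with $s_\sigma\equiv\sigma_1 \pmod{p_1^{\alpha_1}}$ and $s_\sigma\equiv \sigma_2\pmod{p_2^{\alpha_2}}$ (so $s_{11}=1$). An $S_m$-decoding polynomial is a polynomial $P(X)\in\mathbb{F}_{2^t}[X]$ such that $P(\gamma^s)=0$ for every $s\in S_m$ and $P(1)=1$. The number $m$ is called good if there exists an $S_m$-decoding polynomial with fewer than $4$ monomials (nonzero terms). *)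

(* Defs.v *)
From HB Require Import structures.
From mathcomp Require Import all_boot all_order all_algebra all_fingroup all_field.
Set Implicit Arguments. Unset Strict Implicit. Unset Printing Implicit Defensive.
Import GRing.Theory.
Local Open Scope ring_scope.

(* ord_mod m a = multiplicative order of a modulo m: the least k >= 1 with
   a^k = 1 (mod m).  (For gcd(a,m)=1 this k is <= m, so the search over
   1..m finds it.) *)
Definition ord_mod (m a : nat) : nat :=
  (find (fun k => (a ^ k.+1 %% m == 1 %% m)%N) (iota 0 m)).+1.

Definition canon_elt (q1 q2 : nat) (s1 s2 : bool) : nat :=
  (chinese q1 q2 s1 s2 %% (q1 * q2))%N.

Definition canonical_set (q1 q2 : nat) : seq nat :=
  [:: canon_elt q1 q2 false true; canon_elt q1 q2 true false;
      canon_elt q1 q2 true true].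

Definition nmonomials (F : fieldType) (P : {poly F}) : nat :=
  count (fun c => c != 0) P.

Definition decoding_poly (F : fieldType) (gamma : F) (q1 q2 : nat)
    (P : {poly F}) : Prop :=
  (forall s, s \in canonical_set q1 q2 -> P.[gamma ^+ s] = 0) /\ P.[1] = 1.

Definition good (F : fieldType) (gamma : F) (q1 q2 : nat) : Prop :=
  exists P : {poly F}, decoding_poly gamma q1 q2 P /\ (nmonomials P < 4)%N.

Definition rho (F : fieldType) (z1 z2 : F) : F :=
  (1 + z2^-1) * (1 + z1^-1)^-1.

Definition inD (F : finFieldType) (q1 q2 : nat) (z : {unit F} * {unit F}) : Prop :=
  [/\ z.1 != 1%g, z.2 != 1%g, (#[z.1]%g %| q1)%N & (#[z.2]%g %| q2)%N].

Definition rho_injective_on_D (F : finFieldType) (q1 q2 : nat) : Prop :=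
  forall z w : {unit F} * {unit F}, inD q1 q2 z -> inD q1 q2 w ->
    rho (FinRing.uval z.1) (FinRing.uval z.2) =
    rho (FinRing.uval w.1) (FinRing.uval w.2) -> z = w.

(* Main.v *)
Require Import Defs.
From HB Require Import structures.
From mathcomp Require Import all_boot all_order all_algebra all_fingroup all_field.
From mathcomp Require Import ring cyclic.
From Stdlib Require Import Classical_Prop.
Set Implicit Arguments. Unset Strict Implicit. Unset Printing Implicit Defensive.
Import GRing.Theory.
Local Open Scope ring_scope.

Definition R1 (F : fieldType) (z1 z2 w1 w2 : F) : F :=
  (z2 - 1) * z1 * ((w1 - 1) * w2) - (w2 - 1) * w1 * ((z1 - 1) * z2).

Lemma lemB (F : fieldType) (a b c a1 a2 b1 b2 : F) :
  a1 != 0 -> a2 != 0 -> b1 != 0 -> b2 != 0 ->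
  a + b + c - 1 = 0 -> a + b * a1 + c * a2 = 0 -> a + b * b1 + c * b2 = 0 ->
  a + b * (a1 * b1) + c * (a2 * b2) = 0 ->
  [/\ a1 != 1, a2 != 1, b1 != 1, b2 != 1 & (a1 != a2 /\ R1 a1 b1 a2 b2 = 0)].
Proof.
move=> na1 na2 nb1 nb2 E1 E2 E3 E4.
split; last split.
- apply/eqP=> h; subst a1; move/eqP: nb2; apply.
  have -> : b2 = ((a + b * b1 + c * b2) - (a + b * (1 * b1) + c * (a2 * b2)))
      - b2 * ((a + b + c - 1) - (a + b * 1 + c * a2)) by ring.
  by rewrite E1 E2 E3 E4 !subrr mulr0 subr0.
- apply/eqP=> h; subst a2; move/eqP: nb1; apply.
  have -> : b1 = ((a + b * b1 + c * b2) - (a + b * (a1 * b1) + c * (1 * b2)))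
      - b1 * ((a + b + c - 1) - (a + b * a1 + c * 1)) by ring.
  by rewrite E1 E2 E3 E4 !subrr mulr0 subr0.
- apply/eqP=> h; subst b1; move/eqP: na2; apply.
  have -> : a2 = ((a + b * a1 + c * a2) - (a + b * (a1 * 1) + c * (a2 * b2)))
      - a2 * ((a + b + c - 1) - (a + b * 1 + c * b2)) by ring.
  by rewrite E1 E2 E3 E4 !subrr mulr0 subr0.
- apply/eqP=> h; subst b2; move/eqP: na1; apply.
  have -> : a1 = ((a + b * a1 + c * a2) - (a + b * (a1 * b1) + c * (a2 * 1)))
      - a1 * ((a + b + c - 1) - (a + b * b1 + c * 1)) by ring.
  by rewrite E1 E2 E3 E4 !subrr mulr0 subr0.
- apply/eqP=> h; subst a2; move/eqP: na1; apply.
  have -> : a1 = (1 - a1) * ((a + b * a1 + c * a1) - (a + b * (a1 * b1) + c * (a1 * b2)))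
      - a1 * ((a + b + c - 1) - (a + b * a1 + c * a1) - (a + b * b1 + c * b2)
              + (a + b * (a1 * b1) + c * (a1 * b2))) by ring.
  by rewrite E1 E2 E3 E4 !subrr addr0 !mulr0 subrr.
- set e1 := a + b + c - 1; set e2 := a + b * a1 + c * a2.
  set e3 := a + b * b1 + c * b2; set e4 := a + b * (a1 * b1) + c * (a2 * b2).
  have -> : R1 a1 b1 a2 b2 = (a2 - a1) * ((b1 - 1) * (b2 - 1) * (e2 - e1) - (b1 - 1) * (e4 - e3 - e2 + e1))
     - (b2 - b1) * ((a1 - 1) * (a2 - 1) * (e3 - e1) - (a1 - 1) * (e4 - e3 - e2 + e1)).
    rewrite /R1 /e1 /e2 /e3 /e4; ring.
  rewrite /e1 /e2 /e3 /e4 E1 E2 E3 E4; ring.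
Qed.

Lemma lemC (F : fieldType) (z1 z2 w1 w2 : F) :
  z1 != 1 -> z2 != 1 -> w1 != 1 -> w2 != 1 -> z2 != w2 ->
  R1 z1 z2 w1 w2 = 0 ->
  exists a b c : F, [/\ a + b + c = 1, a + b * z1 + c * w1 = 0,
     a + b * z2 + c * w2 = 0 & a + b * (z1 * z2) + c * (w1 * w2) = 0].
Proof.
move=> hz1 hz2 hw1 hw2 hzw hR.
have s1 : z1 - 1 != 0 by rewrite subr_eq0.
have s2 : w1 - 1 != 0 by rewrite subr_eq0.
have t1 : z2 - 1 != 0 by rewrite subr_eq0.
have t2 : w2 - 1 != 0 by rewrite subr_eq0.
have d : w2 - z2 != 0 by rewrite subr_eq0 eq_sym.
pose B : F := - w2 * (z2 - 1) / (w2 - z2).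
have hB1 : B * (w2 - z2) + (z2 - 1) * w2 = 0 by rewrite /B; field.
have hB2 : B * (w1 - z1) + (z1 - 1) * w1 = 0.
  have -> : B * (w1 - z1) + (z1 - 1) * w1 = - R1 z1 z2 w1 w2 / (w2 - z2).
    by rewrite /B /R1; field.
  by rewrite hR oppr0 mul0r.
pose b : F := B / ((z1 - 1) * (z2 - 1)).
pose c : F := (1 - B) / ((w1 - 1) * (w2 - 1)).
exists (1 - b - c), b, c; split.
- by ring.
- have -> : 1 - b - c + b * z1 + c * w1 = (B * (w2 - z2) + (z2 - 1) * w2) / ((z2 - 1) * (w2 - 1)).
    by rewrite /b /c; field; rewrite ?s1 ?s2 ?t1 ?t2 ?d.
  by rewrite hB1 mul0r.
- have -> : 1 - b - c + b * z2 + c * w2 = (B * (w1 - z1) + (z1 - 1) * w1) / ((z1 - 1) * (w1 - 1)).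
    by rewrite /b /c; field; rewrite ?s1 ?s2 ?t1 ?t2 ?d.
  by rewrite hB2 mul0r.
- have -> : 1 - b - c + b * (z1 * z2) + c * (w1 * w2) =
     (B * (w2 - z2) + (z2 - 1) * w2) / ((z2 - 1) * (w2 - 1)) +
     (B * (w1 - z1) + (z1 - 1) * w1) / ((z1 - 1) * (w1 - 1)).
    by rewrite /b /c; field; rewrite ?s1 ?s2 ?t1 ?t2 ?d.
  by rewrite hB1 hB2 !mul0r addr0.
Qed.

Lemma oppE (F : fieldType) (h2 : (1 + 1 : F) = 0) (u : F) : - u = u.
Proof.
have h : u + u = 0 by rewrite -[u]mul1r -mulrDl h2 mul0r.
by apply/eqP; rewrite eq_sym -addr_eq0 h.
Qed.

Lemma rhoE (F : fieldType) (h2 : (1 + 1 : F) = 0) (z1 z2 : F) :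
  z1 != 0 -> z2 != 0 -> z1 != 1 ->
  rho z1 z2 = ((z2 - 1) * z1) / ((z1 - 1) * z2).
Proof.
move=> n1 n2 o1.
have s1 : z1 - 1 != 0 by rewrite subr_eq0.
have e (u : F) : 1 + u^-1 = 1 - u^-1 by rewrite (oppE h2 u^-1).
rewrite /rho !e; field.
by rewrite n1 n2 s1.
Qed.

Lemma rho_eq (F : fieldType) (h2 : (1 + 1 : F) = 0) (z1 z2 w1 w2 : F) :
  z1 != 0 -> z2 != 0 -> z1 != 1 -> w1 != 0 -> w2 != 0 -> w1 != 1 ->
  (rho z1 z2 = rho w1 w2 <-> R1 z1 z2 w1 w2 = 0).
Proof.
move=> n1 n2 o1 m1 m2 p1.
rewrite !rhoE // /R1.
have s1 : z1 - 1 != 0 by rewrite subr_eq0.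
have s2 : w1 - 1 != 0 by rewrite subr_eq0.
split.
- move/eqP; rewrite eqr_div ?mulf_neq0 // => /eqP ->; exact: subrr.
- by move/eqP; rewrite subr_eq0 -eqr_div ?mulf_neq0 // => /eqP.
Qed.

Lemma sparse_rep (F : fieldType) (s : seq F) :
  exists l : seq (F * nat), size l = count (fun c => c != 0) s /\
    forall z, \sum_(i < size s) s`_i * z ^+ i = \sum_(p <- l) p.1 * z ^+ p.2.
Proof.
elim: s => [|c s [l [hl hs]]].
  by exists [::]; split => // z; rewrite big_ord0 big_nil.
pose l' := map (fun p : F * nat => (p.1, p.2.+1)) l.
have hl' z : \sum_(p <- l') p.1 * z ^+ p.2 = z * \sum_(p <- l) p.1 * z ^+ p.2.
  rewrite big_map mulr_sumr; apply: eq_bigr => p _ /=.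
  by rewrite exprS mulrCA.
have hsum z : \sum_(i < size (c :: s)) (c :: s)`_i * z ^+ i = c + z * \sum_(p <- l) p.1 * z ^+ p.2.
  rewrite /= big_ord_recl /= expr0 mulr1 -hs mulr_sumr; congr (_ + _).
  by apply: eq_bigr => i _; rewrite exprS mulrCA.
case: (eqVneq c 0) => [c0|cn0].
- exists l'; split; first by rewrite /= c0 eqxx size_map hl.
  by move=> z; rewrite hsum hl' c0 add0r.
- exists ((c, 0%N) :: l'); split; first by rewrite /= cn0 size_map hl.
  by move=> z; rewrite hsum big_cons hl' /= expr0 mulr1.
Qed.

Lemma three_terms (F : fieldType) (P : {poly F}) : (nmonomials P < 4)%N ->
  exists a b c : F, exists i j k : nat,
    forall z, P.[z] = a * z ^+ i + b * z ^+ j + c * z ^+ k.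
Proof.
rewrite /nmonomials; have [l [hl hs]] := sparse_rep P.
rewrite -hl => hsz.
have hP z : P.[z] = \sum_(p <- l) p.1 * z ^+ p.2 by rewrite horner_coef hs.
case: l hl hs hsz hP => [|[a i] [|[b j] [|[c k] [|? ?]]]] //= _ _ _ hP.
- by exists 0, 0, 0, 0%N, 0%N, 0%N => z; rewrite hP big_nil !mul0r !addr0.
- by exists a, 0, 0, i, 0%N, 0%N => z; rewrite hP big_cons big_nil !mul0r !addr0.
- by exists a, b, 0, i, j, 0%N => z; rewrite hP !big_cons big_nil !mul0r !addr0 ?addrA.
- by exists a, b, c, i, j, k => z; rewrite hP !big_cons big_nil !addr0 ?addrA.
Qed.

Lemma count_le3 (F : fieldType) (P : {poly F}) (i j k : nat) :
  (forall n, n \notin [:: i; j; k] -> P`_n = 0) -> (nmonomials P < 4)%N.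
Proof.
move=> hP; rewrite /nmonomials.
rewrite -(mkseq_nth 0 P) /mkseq count_map.
apply: (@leq_ltn_trans (count (mem [:: i; j; k]) (iota 0 (size P)))).
  apply: sub_count => n /=; apply: contraR => /hP ->; by rewrite eqxx.
rewrite -size_filter ltnS.
have -> : 3%N = size [:: i; j; k] by [].
apply: uniq_leq_size; first by rewrite filter_uniq // iota_uniq.
by move=> n; rewrite mem_filter => /andP [].
Qed.

Lemma root_pow (F : fieldType) (z : F) (q n r : nat) :
  z ^+ q = 1 -> (n %% q = r %% q)%N -> z ^+ n = z ^+ r.
Proof. by move=> hz h; rewrite -(expr_mod n hz) -(expr_mod r hz) h. Qed.

Lemma canon_modl q1 q2 b1 b2 : coprime q1 q2 ->
  (canon_elt q1 q2 b1 b2 %% q1 = b1 %% q1)%N.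
Proof.
by move=> co; rewrite /canon_elt modn_dvdm ?dvdn_mulr // chinese_modl.
Qed.

Lemma canon_modr q1 q2 b1 b2 : coprime q1 q2 ->
  (canon_elt q1 q2 b1 b2 %% q2 = b2 %% q2)%N.
Proof.
by move=> co; rewrite /canon_elt modn_dvdm ?dvdn_mull // chinese_modr.
Qed.

Lemma nz_of_root (F : fieldType) (z : F) q : (0 < q)%N -> z ^+ q = 1 -> z != 0.
Proof.
move=> q0 h; apply/eqP => z0; move: h; rewrite z0 expr0n.
by case: q q0 => //= q _ /eqP; rewrite eq_sym oner_eq0.
Qed.

Lemma mkU_ex (F : finFieldType) (x : F) : x != 0 ->
  exists u : {unit F}, FinRing.uval u = x.
Proof.
move=> hx; have ux : x \is a GRing.unit by rewrite unitfE.
by exists (FinRing.Unit ux).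
Qed.

Unset Implicit Arguments.

Theorem theorem2 (p1 p2 a1 a2 : nat) :
  prime p1 -> prime p2 -> (2 < p1)%N -> (2 < p2)%N -> p1 != p2 ->
  (0 < a1)%N -> (0 < a2)%N ->
  let q1 := (p1 ^ a1)%N in let q2 := (p2 ^ a2)%N in
  let m := (q1 * q2)%N in
  let t := ord_mod m 2 in
  forall (F : finFieldType), #|F| = (2 ^ t)%N ->
  forall gamma : F, m.-primitive_root gamma ->
  (good gamma q1 q2 <-> ~ rho_injective_on_D F q1 q2).
Proof.
move=> pr1 pr2 g1 g2 ne12 a1p a2p q1 q2 m t F cardF gamma prim.
have q1gt1 : (1 < q1)%N.
  by apply: (@leq_trans p1); [exact: ltnW | rewrite /q1 -{1}(expn1 p1) leq_exp2l // ltnW].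
have q2gt1 : (1 < q2)%N.
  by apply: (@leq_trans p2); [exact: ltnW | rewrite /q2 -{1}(expn1 p2) leq_exp2l // ltnW].
have co : coprime q1 q2.
  by rewrite /q1 /q2 coprimeXl // coprimeXr // prime_coprime // dvdn_prime2.
have m0 : (0 < m)%N by rewrite /m muln_gt0 (ltnW q1gt1) (ltnW q2gt1).
have h2 : (1 + 1 : F) = 0.
  have ch : (2 \in [pchar F])%N := card_finPcharP cardF (isT : prime 2).
  by rewrite -mulr2n (pcharf0 ch).
have gm : gamma ^+ m = 1 := prim_expr_order prim.
set s10 := canon_elt q1 q2 true false.
set s01 := canon_elt q1 q2 false true.
set s11 := canon_elt q1 q2 true true.
set x := gamma ^+ s10.
set y := gamma ^+ s01.
set g := gamma ^+ s11.
have hx : x ^+ q1 = 1.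
  rewrite /x -exprM (@root_pow _ gamma m _ 0 gm) ?expr0 // mod0n.
  have d2 : (q2 %| s10)%N by rewrite /dvdn /s10 canon_modr //= mod0n.
  apply/eqP; change (m %| s10 * q1)%N.
  by rewrite /m (mulnC q1 q2) dvdn_pmul2r // ltnW.
have hy : y ^+ q2 = 1.
  rewrite /y -exprM (@root_pow _ gamma m _ 0 gm) ?expr0 // mod0n.
  have d1 : (q1 %| s01)%N by rewrite /dvdn /s01 canon_modl //= mod0n.
  apply/eqP; change (m %| s01 * q2)%N.
  by rewrite /m dvdn_pmul2r // ltnW.
have hg : g = x * y.
  rewrite /g /x /y -exprD (@root_pow _ gamma m _ (s10 + s01) gm) //.
  apply/eqP; rewrite /m chinese_remainder //; apply/andP; split; apply/eqP.
    by rewrite -modnDm /s10 /s01 /s11 !canon_modl //= mod0n addn0 modn_mod.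
  by rewrite -modnDm /s10 /s01 /s11 !canon_modr //= mod0n add0n modn_mod.
have surj : forall z1 z2 : F, z1 ^+ q1 = 1 -> z2 ^+ q2 = 1 ->
    exists j, x ^+ j = z1 /\ y ^+ j = z2.
  move=> z1 z2 h1 h2'.
  have hm : (z1 * z2) ^+ m = 1.
    by rewrite exprMn /m exprM h1 expr1n mulnC exprM h2' expr1n mulr1.
  have [[i _] /= hi] := prim_rootP prim hm.
  exists i; split.
    rewrite /x -exprM mulnC exprM -hi exprMn.
    rewrite (@root_pow _ z1 q1 _ 1 h1) ?(@root_pow _ z2 q2 _ 0 h2') ?expr0 ?mulr1 ?expr1 //.
      by rewrite /s10 canon_modr.
    by rewrite /s10 canon_modl.
  rewrite /y -exprM mulnC exprM -hi exprMn.
  rewrite (@root_pow _ z1 q1 _ 0 h1) ?(@root_pow _ z2 q2 _ 1 h2') ?expr0 ?mul1r ?expr1 //.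
    by rewrite /s01 canon_modr.
  by rewrite /s01 canon_modl.
have q1p : (0 < q1)%N by exact: ltnW.
have q2p : (0 < q2)%N by exact: ltnW.
have nx : x != 0 := nz_of_root q1p hx.
have ny : y != 0 := nz_of_root q2p hy.
have in10 : s10 \in canonical_set q1 q2 by rewrite /canonical_set !inE eqxx ?orbT.
have in01 : s01 \in canonical_set q1 q2 by rewrite /canonical_set !inE eqxx ?orbT.
have in11 : s11 \in canonical_set q1 q2 by rewrite /canonical_set !inE eqxx ?orbT.
split.
- move=> [P [[hroots h1] hcnt]] hinj.
  have [a [b [c [i [j [k hP]]]]]] := three_terms hcnt.
  have E1 : a + b + c - 1 = 0 by rewrite -h1 hP !expr1n !mulr1 subrr.
  have E2' := hroots _ in10; rewrite -/x hP in E2'.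
  have E3' := hroots _ in01; rewrite -/y hP in E3'.
  have E4' := hroots _ in11; rewrite -/g hP hg !exprMn in E4'.
  have nxi : x ^+ i != 0 := expf_neq0 i nx.
  have nyi : y ^+ i != 0 := expf_neq0 i ny.
  pose al1 := x ^+ j / x ^+ i; pose al2 := x ^+ k / x ^+ i.
  pose be1 := y ^+ j / y ^+ i; pose be2 := y ^+ k / y ^+ i.
  have E2 : a + b * al1 + c * al2 = 0.
    have -> : a + b * al1 + c * al2 = (a * x ^+ i + b * x ^+ j + c * x ^+ k) / x ^+ i.
      by rewrite /al1 /al2; field.
    by rewrite E2' mul0r.
  have E3 : a + b * be1 + c * be2 = 0.
    have -> : a + b * be1 + c * be2 = (a * y ^+ i + b * y ^+ j + c * y ^+ k) / y ^+ i.
      by rewrite /be1 /be2; field.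
    by rewrite E3' mul0r.
  have E4 : a + b * (al1 * be1) + c * (al2 * be2) = 0.
    have -> : a + b * (al1 * be1) + c * (al2 * be2) =
      (a * (x ^+ i * y ^+ i) + b * (x ^+ j * y ^+ j) + c * (x ^+ k * y ^+ k)) / (x ^+ i * y ^+ i).
      by rewrite /al1 /al2 /be1 /be2; field; rewrite nxi nyi.
    by rewrite E4' mul0r.
  have nal1 : al1 != 0 by rewrite /al1 mulf_neq0 ?invr_eq0 ?(expf_neq0 _ nx) ?(expf_neq0 _ ny).
  have nal2 : al2 != 0 by rewrite /al2 mulf_neq0 ?invr_eq0 ?(expf_neq0 _ nx) ?(expf_neq0 _ ny).
  have nbe1 : be1 != 0 by rewrite /be1 mulf_neq0 ?invr_eq0 ?(expf_neq0 _ nx) ?(expf_neq0 _ ny).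
  have nbe2 : be2 != 0 by rewrite /be2 mulf_neq0 ?invr_eq0 ?(expf_neq0 _ nx) ?(expf_neq0 _ ny).
  have rootx n : (x ^+ n / x ^+ i) ^+ q1 = 1.
    by rewrite exprMn exprVn (exprAC x n q1) (exprAC x i q1) hx !expr1n invr1 mulr1.
  have rooty n : (y ^+ n / y ^+ i) ^+ q2 = 1.
    by rewrite exprMn exprVn (exprAC y n q2) (exprAC y i q2) hy !expr1n invr1 mulr1.
  have [o1 o2 o3 o4 [o5 hR]] := lemB nal1 nal2 nbe1 nbe2 E1 E2 E3 E4.
  have [u1 hu1] := mkU_ex nal1.
  have [u2 hu2] := mkU_ex nal2.
  have [v1 hv1] := mkU_ex nbe1.
  have [v2 hv2] := mkU_ex nbe2.
  have inDu (u v : {unit F}) (al be : F) : FinRing.uval u = al -> FinRing.uval v = be ->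
      al != 1 -> be != 1 -> al ^+ q1 = 1 -> be ^+ q2 = 1 -> inD q1 q2 (u, v).
    move=> hu hv n1 n2 r1 r2; split => /=.
    - by apply: contra n1 => /eqP h; rewrite -hu h.
    - by apply: contra n2 => /eqP h; rewrite -hv h.
    - by rewrite order_dvdn; apply/eqP/val_inj; rewrite /= FinRing.val_unitX /= hu r1.
    - by rewrite order_dvdn; apply/eqP/val_inj; rewrite /= FinRing.val_unitX /= hv r2.
  have D1 := inDu u1 v1 _ _ hu1 hv1 o1 o3 (rootx j) (rooty j).
  have D2 := inDu u2 v2 _ _ hu2 hv2 o2 o4 (rootx k) (rooty k).
  have hr : rho (FinRing.uval (u1, v1).1) (FinRing.uval (u1, v1).2) =
            rho (FinRing.uval (u2, v2).1) (FinRing.uval (u2, v2).2).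
    by rewrite /= hu1 hu2 hv1 hv2; apply/(rho_eq h2).
  have := hinj _ _ D1 D2 hr; case => e1 _.
  by move: o5; rewrite -hu1 -hu2 e1 eqxx.
- move=> hni; case: (classic (good gamma q1 q2)) => // ng.
  exfalso; apply: hni => -[u1 v1] [u2 v2] D1 D2 hr.
  case: (eqVneq (u1, v1) (u2, v2)) => // hne; exfalso; apply: ng.
  case: D1 => /= n11 n12 d11 d12; case: D2 => /= n21 n22 d21 d22.
  move: hr => /=.
  have unz (u : {unit F}) : FinRing.uval u != 0.
    by have := valP u; rewrite unitfE.
  have un1 (u : {unit F}) : u != 1%g -> FinRing.uval u != 1.
    by move=> h; apply: contra h => /eqP h; apply/eqP/val_inj; exact: h.
  have urt (u : {unit F}) q : (#[u]%g %| q)%N -> FinRing.uval u ^+ q = 1.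
    move=> h; rewrite -FinRing.val_unitX; move: h; rewrite order_dvdn => /eqP ->.
    by [].
  set z1 := FinRing.uval u1; set z2 := FinRing.uval v1.
  set w1 := FinRing.uval u2; set w2 := FinRing.uval v2.
  move/(rho_eq h2 (unz u1) (unz v1) (un1 _ n11) (unz u2) (unz v2) (un1 _ n21)) => hR.
  have hzw : z2 != w2.
    apply/eqP => e; move: hR; rewrite -/z1 -/z2 -/w1 -/w2 -e.
    have -> : R1 z1 z2 w1 z2 = (z2 - 1) * z2 * (w1 - z1) by rewrite /R1; ring.
    move/eqP; rewrite !mulf_eq0 !subr_eq0 (negPf (un1 _ n12)) (negPf (unz v1)) /=.
    move/eqP => e1; move/eqP: hne; apply.
    by congr (_, _); apply: val_inj; rewrite /= -/z1 -/w1 -/z2 -/w2 ?e1.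
  have [a [b [c [Ea Eb Ec Ed]]]] := lemC (un1 _ n11) (un1 _ n12) (un1 _ n21) (un1 _ n22) hzw hR.
  have [j [hj1 hj2]] := surj _ _ (urt _ _ d11) (urt _ _ d12).
  have [k [hk1 hk2]] := surj _ _ (urt _ _ d21) (urt _ _ d22).
  exists (a%:P + b *: 'X^j + c *: 'X^k).
  have ev z : (a%:P + b *: 'X^j + c *: 'X^k).[z] = a + b * z ^+ j + c * z ^+ k.
    by rewrite !hornerD hornerC !hornerZ !hornerXn.
  split; first split.
  - move=> s; rewrite /canonical_set !inE => /or3P [] /eqP ->; rewrite ev.
    + by rewrite -/y hj2 hk2.
    + by rewrite -/x hj1 hk1.
    + by rewrite -/g hg !exprMn hj1 hj2 hk1 hk2.
  - by rewrite ev !expr1n !mulr1.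
  - apply: (@count_le3 _ _ 0 j k) => n; rewrite !inE !negb_or => /and3P [h0 hj hk].
    by rewrite !coefD coefC coefZ coefXn coefZ coefXn (negPf h0) (negPf hj) (negPf hk) !mulr0 !addr0.
Qed.
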